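(* Let $p>1$ be an integer and let $u^{(p)}$ be the fixed point of the substitution $\varphi_p(L)=L^pS$, $\varphi_p(S)=M$, $\varphi_p(M)=L^{p-1}S$. If $Sz'S$ is a factor of $u^{(p)}$ with $|z'|_S=0$, then $z'=L^p$, or $z'=ML^p$, or $z'=ML^{p-1}$.
   Context: $u^{(p)}=\lim_{n\to\infty}\varphi_p^n(L)$. A factor is a finite contiguous subword; $|w|_a$ is the number of occurrences of the letter $a$ in $w$; $L^k$ denotes $k$ concatenated copies of $L$. *)

(* Defs.v *)
From HB Require Import structures.
From mathcomp Require Import all_boot.
Set Implicit Arguments. Unset Strict Implicit. Unset Printing Implicit Defensive.

Inductive letter := L | S | M.

Definition letter_eqb (a b : letter) : bool :=
  match a, b with
  | L, L | S, S | M, M => true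
  | _, _ => false
  end.

Lemma letter_eqP : Equality.axiom letter_eqb.
Proof. by case; case; constructor. Qed.

HB.instance Definition _ := hasDecEq.Build letter letter_eqP.

Definition Lpow (k : nat) : seq letter := nseq k L.

Definition phi (p : nat) (a : letter) : seq letter :=
  match a with
  | L => Lpow p ++ [:: S]
  | S => [:: M]
  | M => Lpow p.-1 ++ [:: S]
  end.

Definition phiw (p : nat) (w : seq letter) : seq letter := flatten (map (phi p) w).

Definition phin (p n : nat) : seq letter := iter n (phiw p) [:: L].

(* u is the limit of phi_p^n(L) in the product topology: every position i
   is eventually defined in phi_p^n(L) and eventually constant equal to u i. *)
Definition is_limit_fixed_point (p : nat) (u : nat -> letter) : Prop :=
  forall i, exists N, forall n, N <= n ->
    i < size (phin p n) /\ nth L (phin p n) i = u i.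

Definition factor_of (w : seq letter) (u : nat -> letter) : Prop :=
  exists i, forall j, j < size w -> u (i + j) = nth L w j.

(* Main.v *)
Require Import Defs.
From mathcomp Require Import all_boot.
From mathcomp Require Import zify.

Inductive blk := B0 | B1 | B2.

Definition cw (p : nat) (d : blk) : seq letter :=
  match d with
  | B0 => Lpow p
  | B1 => M :: Lpow p
  | B2 => M :: Lpow p.-1
  end.

Definition bw p d := cw p d ++ [:: S].

Definition img (p : nat) (d : blk) : seq blk :=
  match d with
  | B0 => B1 :: nseq p.-1 B0
  | B1 => B2 :: nseq p B0
  | B2 => B2 :: nseq p.-1 B0
  end.

Lemma notS_Lpow k : S \notin Lpow k.
Proof. by rewrite /Lpow mem_nseq andbF. Qed.

Lemma notS_cw p d : S \notin cw p d.
Proof. by case: d => /=; rewrite ?in_cons /= notS_Lpow. Qed.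

Lemma split_S (c x R Q : seq letter) : S \notin c -> c ++ S :: R = x ++ S :: Q ->
  (x = c /\ R = Q) \/ exists x', x = c ++ S :: x' /\ R = x' ++ S :: Q.
Proof.
elim: c x => [|a c IH] [|b x] /=.
- by move=> _ [->]; left.
- by move=> _ [<- ->]; right; exists x.
- by rewrite in_cons => /norP[/eqP h _] [e]; rewrite e in h.
- rewrite in_cons => /norP[_ hc] [-> e].
  case: (IH x hc e) => [[-> ->]|[x' [-> ->]]]; first by left.
  by right; exists x'.
Qed.

Lemma keyK p (t : seq letter) z' y : S \notin t -> S \notin z' ->
  forall ds x, flatten (map (bw p) ds) ++ t = x ++ S :: z' ++ S :: y ->
  z' = Lpow p \/ z' = M :: Lpow p \/ z' = M :: Lpow p.-1.
Proof.
move=> ht hz; elim=> [|d ds IH] x /=.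
- move=> e; move: ht; rewrite e mem_cat in_cons eqxx orbT //.
- rewrite {1}/bw -!catA /= => e.
  case: (@split_S _ _ _ _ (notS_cw p d) e) => [[_ e2]|[x' [_ e2]]]; last exact: IH e2.
  move: e2; clear IH e; case: ds => [|d' ds] /=.
  + move=> e2; move: ht; rewrite e2 mem_cat in_cons eqxx orbT //.
  + rewrite {1}/bw -!catA /= => e2.
    case: (@split_S _ _ _ _ (notS_cw p d') e2) => [[-> _]|[x'' [ez _]]].
    * by case: d' {e2} => /=; auto.
    * by move: hz; rewrite ez mem_cat in_cons eqxx orbT.
Qed.

Lemma fl_cons (T : Type) (x : seq T) s : flatten (x :: s) = x ++ flatten s.
Proof. by []. Qed.

Lemma phiw_cat p a b : phiw p (a ++ b) = phiw p a ++ phiw p b.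
Proof. by rewrite /phiw map_cat flatten_cat. Qed.

Lemma phiw_Lpow p k : phiw p (Lpow k) = flatten (map (bw p) (nseq k B0)).
Proof. by elim: k => //= k IH; rewrite /phiw /= -/(phiw p _) IH. Qed.

Lemma phiw_cons p a w : phiw p (a :: w) = phi p a ++ phiw p w.
Proof. by []. Qed.

Lemma img_ok p d : 0 < p ->
  M :: phiw p (bw p d) = flatten (map (bw p) (img p d)) ++ [:: M].
Proof.
case: p => // p _; case: d; rewrite /bw /cw phiw_cat ?phiw_cons phiw_Lpow;
  change (phiw p.+1 [:: S]) with [:: M]; rewrite /= -!catA //.
Qed.

Lemma img_flat p cs : 0 < p ->
  M :: phiw p (flatten (map (bw p) cs)) =
  flatten (map (bw p) (flatten (map (img p) cs))) ++ [:: M].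
Proof.
move=> hp; elim: cs => // d cs IH.
rewrite map_cons fl_cons phiw_cat -cat_cons img_ok // map_cat flatten_cat -catA /=.
by rewrite IH catA.
Qed.

Definition good p (w : seq letter) :=
  exists (cs : seq blk) (t : seq letter), S \notin t /\ w = flatten (map (bw p) cs) ++ t /\
    (t = [::] \/ t = [:: M]) /\ (exists cs', cs = B0 :: cs').

Lemma good_phi p w : 0 < p -> good p w -> good p (phiw p w).
Proof.
case: p => // p hp [cs [t [_ [-> [ht [cs' ->]]]]]].
have e0 : phiw p.+1 (bw p.+1 B0) =
    bw p.+1 B0 ++ flatten (map (bw p.+1) (nseq p B0)) ++ [:: M].
  by rewrite {1}/bw /cw phiw_cat phiw_Lpow -catA.
rewrite phiw_cat map_cons fl_cons phiw_cat e0.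
move Eb: (bw p.+1 B0) => b0.
rewrite -!catA cat1s.
rewrite -cat_cons img_flat // -!catA.
set F := flatten (map (img p.+1) cs').
case: ht => ->.
- exists (B0 :: nseq p B0 ++ F), [:: M].
  split=> //; split; last split; auto; last by eexists.
  by rewrite map_cons fl_cons map_cat flatten_cat -Eb -!catA.
- exists (B0 :: (nseq p B0 ++ F) ++ [:: B2]), [::].
  split=> //; split; last split; auto; last by eexists.
  rewrite map_cons fl_cons !map_cat !flatten_cat -Eb -!catA cats0.
  have -> : [:: M] ++ phiw p.+1 [:: M] = cw p.+1 B2 ++ [:: S] by rewrite /phiw /= cats0.
  by [].
Qed.

Lemma good_phin p n : 0 < p -> good p (phin p n.+1).
Proof.
move=> hp; elim: n => [|n IH].
- exists [:: B0], [::]; split=> //; split; last split; auto.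
  + by rewrite /= /phiw /= !cats0.
  + by eexists.
- by rewrite /phin iterS -/(phin p n.+1); apply: good_phi.
Qed.

Theorem mainTheorem4 (p : nat) (u : nat -> letter) (z' : seq letter) :
  1 < p ->
  is_limit_fixed_point p u ->
  factor_of ([:: S] ++ z' ++ [:: S]) u ->
  count_mem S z' = 0 ->
  z' = Lpow p \/ z' = M :: Lpow p \/ z' = M :: Lpow p.-1.
Proof.
move=> hp hlim [i hi] /count_memPn hz.
set z := [:: S] ++ z' ++ [:: S] in hi.
have [N hN] : exists N, forall n, N <= n -> forall j, j < size z ->
    i + j < size (phin p n) /\ nth L (phin p n) (i + j) = u (i + j).
  elim: (size z) => [|m [N hN]]; first by exists 0.
  have [N' hN'] := hlim (i + m).
  exists (maxn N N') => n; rewrite geq_max => /andP[h1 h2] j.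
  rewrite ltnS leq_eqVlt => /orP[/eqP ->|hj]; first exact: hN'.
  exact: hN.
set w := phin p N.+1.
have hw : forall j, j < size z -> i + j < size w /\ nth L w (i + j) = nth L z j.
  move=> j hj; have [a b] := hN N.+1 (leqnSn N) j hj.
  by split=> //; rewrite b hi.
have hsz : i + size z <= size w.
  have hz0 : (size z).-1 < size z by rewrite /z /= ltnSn.
  have [a _] := hw _ hz0.
  by move: a; rewrite /z /= addnS.
have ez : take (size z) (drop i w) = z.
  move: hsz hw; clearbody w => hsz hw.
  apply: (@eq_from_nth _ L).
    by rewrite size_takel // size_drop; move: hsz; lia.
  have hsz' : size z <= size (drop i w) by rewrite size_drop; move: hsz; lia.
  move=> j; rewrite size_takel // => hj'.
  by rewrite nth_take // nth_drop; case: (hw j hj').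
have ew : w = take i w ++ z ++ drop (size z) (drop i w).
  by have := cat_take_drop (size z) (drop i w); rewrite ez => ->; rewrite cat_take_drop.
have [cs [t [ht [e _]]]] := @good_phin p N (ltnW hp).
rewrite -/w in e; rewrite {1}e /z in ew.
rewrite -!catA !cat1s in ew.
exact: (@keyK p t z' _ ht hz cs _ ew).
Qed.
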